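(* There is an absolute constant $C>0$ such that the following holds. Let $\varepsilon\in(0,1/2]$ and let $A$ be an $n\times n$ random matrix with i.i.d. entries satisfying $\mathbb{E}A_{ij}^2\le1$ and such that almost surely each entry satisfies either $A_{ij}=0$ or $\sqrt n/2\le|A_{ij}|\le 5\sqrt n/\sqrt{\varepsilon}$. Then with probability at least $1-2\exp(-\varepsilon n/4)$ there exist $I,J\subset[n]$ with $|I|,|J|\le\varepsilon n$ such that the matrix $\tilde A$ obtained from $A$ by replacing all entries with indices in $I\times J$ by zero satisfies $$\|\tilde A\|\le\frac{C\ln(\varepsilon^{-1})}{\sqrt\varepsilon}\sqrt n.$$
   Context: $\|\cdot\|$ denotes the operator norm (Euclidean norm to Euclidean norm). *)

(* Defs.v *)
From HB Require Import structures.
From mathcomp Require Import all_boot all_order all_algebra.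
From mathcomp Require Import all_classical all_reals all_analysis.
Set Implicit Arguments. Unset Strict Implicit. Unset Printing Implicit Defensive.
Import Order.TTheory GRing.Theory Num.Theory.
Import numFieldNormedType.Exports.
Local Open Scope classical_set_scope.
Local Open Scope ring_scope.

Definition enorm (R : realType) (n : nat) (v : 'cV[R]_n) : R :=
  Num.sqrt (\sum_(i < n) v i 0 ^+ 2).

Definition opnorm (R : realType) (m n : nat) (M : 'M[R]_(m, n)) : R :=
  sup [set enorm (M *m x) | x in [set x : 'cV[R]_n | enorm x <= 1]].

(* Mutual independence of a finite family of real random variables:
   product rule for preimages of any family of Borel sets (taking B k = setT
   covers every subfamily). *)
Definition mutually_independent (d : measure_display) (T : measurableType d)
  (R : realType) (P : probability T R) (I : finType) (X : I -> T -> R) : Prop :=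
  forall B : I -> set R, (forall k, measurable (B k)) ->
    P (\bigcap_(k in [set: I]) (X k @^-1` B k)) = (\prod_(k : I) P (X k @^-1` B k))%E.

Definition identically_distributed (d : measure_display) (T : measurableType d)
  (R : realType) (P : probability T R) (I : Type) (X : I -> T -> R) : Prop :=
  forall k l (B : set R), measurable B -> P (X k @^-1` B) = P (X l @^-1` B).

Definition zero_block (R : realType) (n : nat) (M : 'M[R]_n) (I J : {set 'I_n}) : 'M[R]_n :=
  \matrix_(i, j) (if (i \in I) && (j \in J) then 0 else M i j).

(* Main.v *)
Require Import Defs.
From HB Require Import structures.
From mathcomp Require Import all_boot all_order all_algebra.
From mathcomp Require Import all_classical all_reals all_analysis.
From mathcomp Require Import ring lra.
Import Order.TTheory GRing.Theory Num.Theory.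
Import numFieldNormedType.Exports.
Local Open Scope classical_set_scope.
Local Open Scope ring_scope.
Section RealPart.
Variable R : realType.

Lemma sum_pow_sets (n : nat) (c : R) :
  \sum_(G : {set 'I_n}) c ^+ #|G| = (1 + c) ^+ n.
Proof.
have -> : (1 + c) ^+ n = \prod_(i : 'I_n) (c + 1).
  by rewrite prodr_const card_ord addrC.
rewrite bigA_distr; apply: eq_bigr => G _.
by rewrite -big_mkcond /= prodr_const.
Qed.

Lemma sq_sum_le (I : finType) (S : {set I}) (a : I -> R) :
  (\sum_(j in S) a j) ^+ 2 <= #|S|%:R * \sum_(j in S) a j ^+ 2.
Proof.
rewrite expr2 big_distrl /=.
have H : forall j k, a j * a k <= (a j ^+ 2 + a k ^+ 2) / 2.
  move=> j k; rewrite ler_pdivlMr // -subr_ge0.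
  have -> : a j ^+ 2 + a k ^+ 2 - a j * a k * 2 = (a j - a k) ^+ 2 by ring.
  exact: sqr_ge0.
apply: (@le_trans _ _ (\sum_(j in S) \sum_(k in S) (a j ^+ 2 + a k ^+ 2) / 2)).
  apply: ler_sum => j _; rewrite big_distrr /=; apply: ler_sum => k _.
  by apply: H.
rewrite (eq_bigr (fun j => (a j ^+ 2 *+ #|S| + \sum_(k in S) a k ^+ 2) / 2)); last first.
  by move=> j _; rewrite -big_distrl /= big_split /= sumr_const.
rewrite -big_distrl /= big_split /= sumr_const sumrMnl.
have E : forall x : R, x *+ #|S| = x * #|S|%:R by move=> x; rewrite mulr_natr.
rewrite E; move: (\sum_(i in S) _) (#|S|%:R) => s m.
have -> : (s * m + s * m) / 2 = m * s by field.
by [].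
Qed.

End RealPart.

Section RealPart2.
Variable R : realType.

Lemma one_le_expR (x : R) : 0 <= x -> 1 <= expR x.
Proof. by move=> x0; rewrite -expR0 ler_expR. Qed.

Definition Wgood (n D : nat) (t : R) (F : {ffun 'I_n -> {set 'I_n}}) : bool :=
  [forall i, (#|F i| == 0%N) || (D < #|F i|)%N] && (t < (\sum_i #|F i|)%:R).

Lemma witness_bound (n D : nat) (q t : R) : 0 <= q ->
  \sum_(F | Wgood n D t F) q ^+ (\sum_i #|F i|)
  <= expR (- t) * (1 + expR (- D%:R) * (1 + expR 1 * expR 1 * q) ^+ n) ^+ n.
Proof.
move=> q0.
set e := expR 1.
have e0 : 0 <= e by apply: expR_ge0.
pose phi := fun G : {set 'I_n} =>
  if #|G| == 0%N then 1 else (e * e * q) ^+ #|G| * expR (- D%:R).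
have phi0 (G : {set 'I_n}) : 0 <= phi G.
  rewrite /phi; case: ifP => _ //.
  by rewrite mulr_ge0 ?expR_ge0 // exprn_ge0 // !mulr_ge0.
have phiq (G : {set 'I_n}) : (#|G| == 0%N) || (D < #|G|)%N -> (e * q) ^+ #|G| <= phi G.
  rewrite /phi; case: ifP => [/eqP ->|_] /= HD; first by rewrite expr0.
  have -> : (e * e * q) ^+ #|G| = (e * q) ^+ #|G| * e ^+ #|G|.
    by rewrite -exprMn mulrAC.
  rewrite -mulrA; apply: ler_peMr; first by rewrite exprn_ge0 // mulr_ge0.
  rewrite /e -expRM_natl mulr1 -expRD one_le_expR // subr_ge0 ler_nat.
  exact: ltnW.
apply: (@le_trans _ _ (\sum_(F | Wgood n D t F) expR (- t) * \prod_i phi (F i))).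
  apply: ler_sum => F /andP [/forallP HF Ht].
  apply: (@le_trans _ _ (expR (- t) * \prod_i (e * q) ^+ #|F i|)); last first.
    apply: ler_wpM2l; first exact: expR_ge0.
    apply: ler_prod => i _; rewrite exprn_ge0 ?mulr_ge0 //=.
    exact: phiq.
  rewrite prodrXr exprMn mulrA; apply: ler_peMl; first by rewrite exprn_ge0.
  rewrite /e -expRM_natl mulr1 -expRD one_le_expR //.
  by rewrite addrC subr_ge0 ltW.
apply: (@le_trans _ _ (\sum_(F : {ffun 'I_n -> {set 'I_n}}) expR (- t) * \prod_i phi (F i))).
  rewrite [X in _ <= X](bigID (fun F => Wgood n D t F)) /= lerDl.
  apply: sumr_ge0 => F _; rewrite mulr_ge0 ?expR_ge0 //.
  by apply: prodr_ge0 => i _.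
rewrite -big_distrr /= ler_wpM2l ?expR_ge0 //.
rewrite -(bigA_distr_bigA (fun (i : 'I_n) G => phi G)) /= prodr_const card_ord.
have s1 : 0 <= \sum_(G : {set 'I_n}) phi G by apply: sumr_ge0.
have s2 : 0 <= 1 + expR (- D%:R) * (1 + e * e * q) ^+ n.
  by rewrite addr_ge0 // mulr_ge0 ?expR_ge0 // exprn_ge0 // addr_ge0 // !mulr_ge0.
rewrite lerXn2r ?nnegrE //.
rewrite (bigD1 finset.set0) //= /phi cards0 eqxx lerD2l.
rewrite -sum_pow_sets big_distrr /=.
rewrite [X in _ <= X](bigD1 finset.set0) //= ler_wpDl //.
  by rewrite mulr_ge0 ?expR_ge0 // exprn_ge0 // !mulr_ge0.
by apply: ler_sum => G; rewrite -cards_eq0 => /negbTE ->; rewrite mulrC.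
Qed.
End RealPart2.

Section RealPart3.
Variable R : realType.

Lemma expR1_le4 : expR 1 <= 4 :> R.
Proof.
have h : 1 / 2 <= expR (- (1 / 2)) :> R.
  apply: le_trans (expR_ge1Dx _); lra.
have h2 : expR (1 / 2) <= 2 :> R.
  have p := expR_gt0 (1 / 2 : R).
  have m := expRxMexpNx_1 (1 / 2 : R).
  move: p m h; move: (expR (1/2)) (expR (- (1/2))) => y z; nra.
have -> : expR 1 = expR (1 / 2) ^+ 2 :> R.
  by rewrite -expRM_natl; congr expR; field.
have -> : (4 : R) = 2 ^+ 2 by rewrite expr2; lra.
by rewrite lerXn2r ?nnegrE ?expR_ge0 //; lra.
Qed.

Lemma ln4_le3 : ln 4 <= 3 :> R.
Proof.
have h4 : (0:R) < 4 by lra.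
rewrite -[X in _ <= X]expRK ler_ln ?posrE ?expR_gt0 //.
apply: le_trans (expR_ge1Dx _); lra.
Qed.

Lemma ln_inv_ge (eps : R) : 0 < eps -> eps <= 1 / 2 -> 1 / 2 <= ln (eps^-1).
Proof.
move=> e0 e1; rewrite lnV ?posrE //.
have := expR_ge1Dx (ln eps); rewrite lnK ?posrE //; lra.
Qed.

Lemma final_real (n D : nat) (q eps : R) : 0 <= q -> q * n%:R <= 4 -> 0 < eps ->
  expR (4 * (expR 1 * expR 1) - D%:R) <= eps / 4 ->
  expR (- (eps * n%:R / 2)) * (1 + expR (- D%:R) * (1 + expR 1 * expR 1 * q) ^+ n) ^+ n
  <= expR (- (eps * n%:R) / 4).
Proof.
move=> q0 qn e0 HD.
set e := expR 1.
have ee0 : 0 <= e * e by rewrite mulr_ge0 ?expR_ge0.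
have h1 : (1 + e * e * q) ^+ n <= expR (4 * (e * e)).
  apply: (@le_trans _ _ (expR (e * e * q) ^+ n)).
    by rewrite lerXn2r ?nnegrE ?expR_ge0 ?expR_ge1Dx // addr_ge0 // mulr_ge0.
  rewrite -expRM_natl ler_expR.
  have -> : n%:R * (e * e * q) = (e * e) * (q * n%:R) by ring.
  by rewrite [X in _ <= X]mulrC ler_wpM2l.
set a := expR (- D%:R) * _.
have a0 : 0 <= a by rewrite mulr_ge0 ?expR_ge0 // exprn_ge0 // addr_ge0 // mulr_ge0.
have ha : a <= eps / 4.
  apply: le_trans HD; rewrite addrC expRD ler_wpM2l ?expR_ge0 //.
apply: (@le_trans _ _ (expR (- (eps * n%:R / 2)) * expR a ^+ n)).
  by rewrite ler_wpM2l ?expR_ge0 // lerXn2r ?nnegrE ?expR_ge0 ?expR_ge1Dx // addr_ge0.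
rewrite -expRM_natl -expRD ler_expR.
have : n%:R * a <= n%:R * (eps / 4) by rewrite ler_wpM2l.
have : 0 <= n%:R :> R by [].
lra.
Qed.
End RealPart3.

Local Close Scope classical_set_scope.

Section Schur.
Variable R : realType.

Lemma opnorm_sparse (n D : nat) (K : R) (M : 'M[R]_n) : 0 <= K ->
  (forall i j, `|M i j| <= K) ->
  (forall i, (#|[set j | M i j != 0%R]| <= D)%N) ->
  (forall j, (#|[set i | M i j != 0%R]| <= D)%N) ->
  opnorm M <= D%:R * K.
Proof.
move=> K0 HK Hr Hc; rewrite /opnorm; apply: ge_sup.
  exists (enorm (M *m 0)), 0 => //.
  by rewrite /= /enorm big1 ?sqrtr0 // => i _; rewrite mxE expr0n.
move=> _ [x hx <-].
set s := \sum_(j < n) x j 0 ^+ 2.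
have s0 : 0 <= s by apply: sumr_ge0 => j _; apply: sqr_ge0.
have key : \sum_(i < n) (M *m x) i 0 ^+ 2 <= (D%:R * K) ^+ 2 * s.
  apply: (@le_trans _ _ (\sum_(i < n) D%:R * \sum_(j < n)
      (if M i j != 0 then K ^+ 2 * x j 0 ^+ 2 else 0))).
    apply: ler_sum => i _; rewrite mxE.
    set S := [set j | M i j != 0].
    rewrite (bigID (fun j => j \in S)) /= [X in _ + X]big1 ?addr0; last first.
      by move=> j; rewrite /S inE negbK => /eqP ->; rewrite mul0r.
    apply: (@le_trans _ _ (#|S|%:R * \sum_(j in S) (M i j * x j 0) ^+ 2)); first exact: sq_sum_le.
    have Hs : 0 <= \sum_(j in S) (M i j * x j 0) ^+ 2.
      by apply: sumr_ge0 => j _; apply: sqr_ge0.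
    apply: (@le_trans _ _ (D%:R * \sum_(j in S) (M i j * x j 0) ^+ 2)).
      by rewrite ler_wpM2r // ler_nat; exact: Hr.
    apply: ler_wpM2l => //.
    rewrite [X in _ <= X](bigID (fun j => j \in S)) /= [X in _ + X]big1 ?addr0; last first.
      by move=> j; rewrite /S inE => /negbTE ->.
    apply: ler_sum => j; rewrite /S inE => ->.
    rewrite exprMn ler_wpM2r ?sqr_ge0 //.
    rewrite -real_normK ?num_real // lerXn2r ?nnegrE //.
  rewrite -big_distrr /= exchange_big /=.
  apply: (@le_trans _ _ (D%:R * \sum_(j < n) D%:R * (K ^+ 2 * x j 0 ^+ 2))).
    apply: ler_wpM2l => //; apply: ler_sum => j _.
    rewrite -big_mkcond /= sumr_const -(mulr_natr (K ^+ 2 * x j 0 ^+ 2)) [X in _ <= X]mulrC.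
    apply: ler_wpM2l; first by rewrite mulr_ge0 ?sqr_ge0.
    by rewrite ler_nat; have := Hc j; rewrite cardsE.
  rewrite -big_distrr /= -big_distrr /= /s exprMn -natrX expr2 natrM.
  by rewrite le_eqVlt; apply/orP; left; apply/eqP; ring.
rewrite /enorm.
apply: (@le_trans _ _ (Num.sqrt ((D%:R * K) ^+ 2 * s))).
  by rewrite ler_sqrt // mulr_ge0 // sqr_ge0.
rewrite sqrtrM ?sqr_ge0 // sqrtr_sqr ger0_norm ?mulr_ge0 //.
by rewrite ler_piMr ?mulr_ge0.
Qed.
End Schur.

Section Comb.
Variable R : realType.
Variable n D : nat.
Variable M : 'M[R]_n.

Definition rowS i : {set 'I_n} := [set j | M i j != 0].
Definition colS j : {set 'I_n} := [set i | M i j != 0].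
Definition HR : {set 'I_n} := [set i | (D < #|rowS i|)%N].
Definition HC : {set 'I_n} := [set j | (D < #|colS j|)%N].
Definition Iset : {set 'I_n} := HR :|: \bigcup_(j in HC) colS j.
Definition Jset : {set 'I_n} := HC :|: \bigcup_(i in HR) rowS i.

Lemma card_bigcup_le (I T : finType) (P : pred I) (F : I -> {set T}) :
  (#|\bigcup_(i | P i) F i| <= \sum_(i | P i) #|F i|)%N.
Proof.
elim/big_rec2: _ => [|i A m _ IH]; first by rewrite cards0.
apply: leq_trans (leq_card_setU _ _).1 _; by rewrite leq_add2l.
Qed.

Lemma card_HR_le : (#|HR| <= \sum_(i in HR) #|rowS i|)%N.
Proof.
rewrite -sum1_card; apply: leq_sum => i; rewrite inE => h.
exact: leq_ltn_trans (leq0n D) h.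
Qed.

Lemma card_HC_le : (#|HC| <= \sum_(j in HC) #|colS j|)%N.
Proof.
rewrite -sum1_card; apply: leq_sum => i; rewrite inE => h.
exact: leq_ltn_trans (leq0n D) h.
Qed.

Lemma card_Iset_le :
  (#|Iset| <= \sum_(i in HR) #|rowS i| + \sum_(j in HC) #|colS j|)%N.
Proof.
apply: leq_trans (leq_card_setU _ _).1 _.
apply: leq_add; first exact: card_HR_le.
exact: card_bigcup_le.
Qed.

Lemma card_Jset_le :
  (#|Jset| <= \sum_(i in HR) #|rowS i| + \sum_(j in HC) #|colS j|)%N.
Proof.
apply: leq_trans (leq_card_setU _ _).1 _.
rewrite [X in (_ <= X)%N]addnC; apply: leq_add; first exact: card_HC_le.
exact: card_bigcup_le.
Qed.

Lemma zb_nz i j : zero_block M Iset Jset i j != 0 ->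
  [&& M i j != 0, i \notin HR & j \notin HC].
Proof.
rewrite /zero_block mxE.
case: ifP => [_|HIJ]; first by rewrite eqxx.
move=> Hm; rewrite Hm /=.
apply/andP; split; apply/negP => H.
- have hI : i \in Iset by rewrite /Iset finset.in_setU H.
  have hJ : j \in Jset.
    by rewrite /Jset finset.in_setU; apply/orP; right; apply/bigcupP; exists i => //; rewrite inE.
  by rewrite hI hJ in HIJ.
- have hJ : j \in Jset by rewrite /Jset finset.in_setU H.
  have hI : i \in Iset.
    by rewrite /Iset finset.in_setU; apply/orP; right; apply/bigcupP; exists j => //; rewrite inE.
  by rewrite hI hJ in HIJ.
Qed.

Lemma zb_row i : (#|[set j | zero_block M Iset Jset i j != 0%R]| <= D)%N.
Proof.
case: (boolP (i \in HR)) => hi.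
  rewrite (_ : [set j | _] = finset.set0) ?cards0 //.
  apply/finset.setP => j; rewrite !inE; apply/negbTE/negP => /zb_nz.
  by rewrite hi andbF.
apply: leq_trans (_ : #|rowS i| <= D)%N.
  apply: subset_leq_card; apply/fintype.subsetP => j; rewrite !inE => /zb_nz.
  by case/andP.
by move: hi; rewrite inE -leqNgt.
Qed.

Lemma zb_col j : (#|[set i | zero_block M Iset Jset i j != 0%R]| <= D)%N.
Proof.
case: (boolP (j \in HC)) => hj.
  rewrite (_ : [set i | _] = finset.set0) ?cards0 //.
  apply/finset.setP => i; rewrite !inE; apply/negbTE/negP => /zb_nz.
  by rewrite hj !andbF.
apply: leq_trans (_ : #|colS j| <= D)%N.
  apply: subset_leq_card; apply/fintype.subsetP => i; rewrite !inE => /zb_nz.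
  by case/andP.
by move: hj; rewrite inE -leqNgt.
Qed.

Lemma zb_bound (K : R) : (forall i j, `|M i j| <= K) -> 0 <= K ->
  forall i j, `|zero_block M Iset Jset i j| <= K.
Proof.
move=> HK K0 i j; rewrite /zero_block mxE; case: ifP => _ //.
by rewrite normr0.
Qed.

End Comb.

Local Open Scope classical_set_scope.
Section Prob.
Variable R : realType.
Variable n : nat. Variable eps : R.
Variables (d : measure_display) (T : measurableType d) (P : probability T R).
Variable A : 'I_n -> 'I_n -> T -> R.
Hypothesis HA : forall i j, measurable_fun setT (A i j).
Hypothesis Hint : forall i j, (\int[P]_w ((A i j w) ^+ 2)%:E <= 1)%E.
Hypothesis Hae : forall i j, {ae P, forall w, A i j w = 0 \/
        (Num.sqrt n%:R / 2 <= `|A i j w| /\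
         `|A i j w| <= 5 * Num.sqrt n%:R / Num.sqrt eps)}.

Definition nz : set R := ~` [set 0].
Lemma nz_meas : measurable nz.
Proof. by apply: measurableC; apply: measurable_set1. Qed.

Lemma pre_meas i j (B : set R) : measurable B -> measurable (A i j @^-1` B).
Proof. by move=> mB; have := HA i j measurableT B mB; rewrite setTI. Qed.

Lemma P_fin (X : set T) : measurable X -> P X = (fine (P X))%:E.
Proof.
move=> mX; rewrite fineK // ge0_fin_numE ?measure_ge0 //.
by apply: le_lt_trans (probability_le1 P mX) _; rewrite ltry.
Qed.

Lemma qbound (i j : 'I_n) : (P (A i j @^-1` nz) <= (4 / n%:R)%:E)%E.
Proof.
have := Hae i j; rewrite /almost_everywhere => -[N [mN PN HN]].
set Z := A i j @^-1` nz.
have mZ : measurable Z by apply: pre_meas; exact: nz_meas.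
set G := Z `&` ~` N.
have mG : measurable G by apply: measurableI => //; apply: measurableC.
have hZ : (P Z <= P G)%E.
  apply: (@le_trans _ _ (P (G `|` N))).
    apply: le_measure; rewrite ?inE //; first exact: measurableU.
    by move=> w Zw; case: (pselect (N w)) => Nw; [right | left].
  apply: le_trans (measureU2 _ _ _) _ => //.
  have h : (P N <= 0)%E by rewrite PN.
  by apply: le_trans (leeD2l _ h) _; rewrite adde0.
have key : ((n%:R / 4)%:E * P G <= 1)%E.
  apply: le_trans (Hint i j).
  rewrite (_ : P G = P (G `&` setT)); last by rewrite setIT.
  rewrite -integral_indic //.
  rewrite -ge0_integralZl_EFin //; try (by move=> x _; rewrite lee_fin indicE; case: (x \in G));
    try (by apply/measurable_realfun.measurable_EFinP; apply: measurable_realfun.measurable_indic); try (by rewrite divr_ge0).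
  under eq_integral => x _ do rewrite -EFinM.
  apply: ge0_le_integral => //.
  - apply/measurable_realfun.measurable_EFinP; apply: measurable_realfun.measurable_funM.
      exact: measurable_cst.
    exact: measurable_realfun.measurable_indic.
  - apply/measurable_realfun.measurable_EFinP; apply: measurable_realfun.measurable_funX; exact: HA.
  - move=> x _; rewrite lee_fin indicE.
    case: (boolP (x \in G)) => [|_]; last by rewrite mulr0 sqr_ge0.
    rewrite inE => -[Zx Nx].
    have Qx : A i j x = 0 \/ (Num.sqrt n%:R / 2 <= `|A i j x| /\
           `|A i j x| <= 5 * Num.sqrt n%:R / Num.sqrt eps).
      by apply: contrapT => Qx; apply: Nx; apply: HN.
    case: Qx => [Ax0|[h1 _]]; first by exfalso; apply: Zx; rewrite /= Ax0.
    rewrite mulr1 -real_normK ?num_real //.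
    have -> : n%:R / 4 = (Num.sqrt n%:R / 2) ^+ 2 :> R.
      by rewrite exprMn sqr_sqrtr // expr2; field.
    rewrite lerXn2r ?nnegrE //.
apply: le_trans hZ _.
move: key; rewrite (P_fin _ mG) -EFinM !lee_fin.
have g0 : 0 <= fine (P G) by apply: fine_ge0; apply: measure_ge0.
have n0 : (0 < n%:R :> R) by rewrite ltr0n; exact: leq_ltn_trans (leq0n _) (ltn_ord i).
move=> h; rewrite ler_pdivlMr // mulrC.
move: h; rewrite mulrAC ler_pdivrMr //; lra.
Qed.

Hypothesis Hind : mutually_independent P (fun k : 'I_n * 'I_n => A k.1 k.2).

Definition Ev (B : 'I_n * 'I_n -> set R) : set T :=
  \bigcap_(k in [set: 'I_n * 'I_n]) ((fun k : 'I_n * 'I_n => A k.1 k.2) k @^-1` B k).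

Lemma Ev_meas (c : 'I_n * 'I_n -> bool) :
  measurable (Ev (fun k => if c k then nz else setT)).
Proof.
apply: fin_bigcap_measurable; first exact: finite_finset.
move=> k _; apply: pre_meas; case: (c k) => //; exact: nz_meas.
Qed.

Lemma Ev_bound (c : 'I_n * 'I_n -> bool) :
  (P (Ev (fun k => if c k then nz else setT)) <=
   (\prod_(k : 'I_n * 'I_n) (if c k then 4 / n%:R else 1))%:E)%E.
Proof.
rewrite /Ev Hind; last by move=> k; case: (c k) => //; exact: nz_meas.
have mk : forall k : 'I_n * 'I_n,
    measurable (A k.1 k.2 @^-1` (if c k then nz else setT)).
  by move=> k; apply: pre_meas; case: (c k) => //; exact: nz_meas.
rewrite (eq_bigr (fun k => (fine (P (A k.1 k.2 @^-1` (if c k then nz else setT))))%:E));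
  last by move=> k _; rewrite -P_fin.
rewrite prodEFin lee_fin; apply: ler_prod => k _.
rewrite fine_ge0 ?measure_ge0 //=.
case: (c k) (mk k) => /= mk'.
  by rewrite -lee_fin -(P_fin _ mk'); exact: (qbound k.1 k.2).
by rewrite -lee_fin -(P_fin _ mk') preimage_setT probability_setT.
Qed.

Lemma bigU_le (I : finType) (Pr : pred I) (E : I -> set T) :
  (forall i, measurable (E i)) ->
  measurable (\big[setU/set0]_(i | Pr i) E i) /\
  (P (\big[setU/set0]_(i | Pr i) E i) <= \sum_(i | Pr i) P (E i))%E.
Proof.
move=> mE; elim/big_rec2: _ => [|i X y _ [mX HX]].
  by split => //; rewrite measure0.
split; first exact: measurableU.
apply: le_trans (measureU2 _ _ _) _ => //.
exact: leeD2l.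
Qed.

Lemma prod_row (q : R) (F : {ffun 'I_n -> {set 'I_n}}) :
  \prod_(k : 'I_n * 'I_n) (if k.2 \in F k.1 then q else 1) = q ^+ (\sum_i #|F i|).
Proof.
rewrite -(pair_bigA _ (fun (i j : 'I_n) => if j \in F i then q else 1)) /= -prodrXr.
by apply: eq_bigr => i _; rewrite -big_mkcond /= prodr_const.
Qed.

Lemma prod_col (q : R) (F : {ffun 'I_n -> {set 'I_n}}) :
  \prod_(k : 'I_n * 'I_n) (if k.1 \in F k.2 then q else 1) = q ^+ (\sum_i #|F i|).
Proof.
rewrite -(pair_bigA _ (fun (i j : 'I_n) => if i \in F j then q else 1)) /= exchange_big /= -prodrXr.
by apply: eq_bigr => i _; rewrite -big_mkcond /= prodr_const.
Qed.

Definition BadR (D : nat) (t : R) : set T :=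
  \big[setU/set0]_(F | Wgood R n D t F) Ev (fun k => if k.2 \in F k.1 then nz else setT).
Definition BadC (D : nat) (t : R) : set T :=
  \big[setU/set0]_(F | Wgood R n D t F) Ev (fun k => if k.1 \in F k.2 then nz else setT).

Lemma BadR_bound D t : measurable (BadR D t) /\
  (P (BadR D t) <= (\sum_(F | Wgood R n D t F) (4 / n%:R) ^+ (\sum_i #|F i|))%:E)%E.
Proof.
have [m h] := bigU_le _ (fun F : {ffun 'I_n -> {set 'I_n}} => Wgood R n D t F)
  (fun F => Ev (fun k => if k.2 \in F k.1 then nz else setT))
  (fun F => Ev_meas (fun k => k.2 \in F k.1)).
split => //; apply: le_trans h _; rewrite -sumEFin; apply: lee_sum => F _.
by rewrite -prod_row; exact: (Ev_bound (fun k => k.2 \in F k.1)).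
Qed.

Lemma BadC_bound D t : measurable (BadC D t) /\
  (P (BadC D t) <= (\sum_(F | Wgood R n D t F) (4 / n%:R) ^+ (\sum_i #|F i|))%:E)%E.
Proof.
have [m h] := bigU_le _ (fun F : {ffun 'I_n -> {set 'I_n}} => Wgood R n D t F)
  (fun F => Ev (fun k => if k.1 \in F k.2 then nz else setT))
  (fun F => Ev_meas (fun k => k.1 \in F k.2)).
split => //; apply: le_trans h _; rewrite -sumEFin; apply: lee_sum => F _.
by rewrite -prod_col; exact: (Ev_bound (fun k => k.1 \in F k.2)).
Qed.

Lemma in_bigU (I : finType) (Pr : pred I) (E : I -> set T) (i : I) w :
  Pr i -> E i w -> (\big[setU/set0]_(j | Pr j) E j) w.
Proof. by move=> Pi Ew; rewrite (bigD1 i) //=; left. Qed.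

Definition Mw (w : T) : 'M[R]_n := \matrix_(i, j) A i j w.

Lemma notBadR D t w : ~ BadR D t w ->
  ((\sum_(i in HR R n D (Mw w)) #|rowS R n (Mw w) i|)%:R <= t).
Proof.
move=> nB; rewrite leNgt; apply/negP => Ht; apply: nB.
pose F := [ffun i => if i \in HR R n D (Mw w) then rowS R n (Mw w) i else finset.set0].
have hs : (\sum_i #|F i| = \sum_(i in HR R n D (Mw w)) #|rowS R n (Mw w) i|)%N.
  rewrite [RHS]big_mkcond /=; apply: eq_bigr => i _; rewrite ffunE.
  by case: ifP => //; rewrite cards0.
apply: (in_bigU _ _ _ F).
  apply/andP; split; last by rewrite hs.
  apply/forallP => i; rewrite ffunE; case: ifP => hi; last by rewrite cards0.
  by move: hi; rewrite inE => ->; rewrite orbT.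
move=> k _ /=; case: ifP => // hk.
move: hk; rewrite ffunE; case: ifP => _; last by rewrite inE.
by rewrite inE /Mw mxE => /eqP.
Qed.

Lemma notBadC D t w : ~ BadC D t w ->
  ((\sum_(j in HC R n D (Mw w)) #|colS R n (Mw w) j|)%:R <= t).
Proof.
move=> nB; rewrite leNgt; apply/negP => Ht; apply: nB.
pose F := [ffun j => if j \in HC R n D (Mw w) then colS R n (Mw w) j else finset.set0].
have hs : (\sum_i #|F i| = \sum_(j in HC R n D (Mw w)) #|colS R n (Mw w) j|)%N.
  rewrite [RHS]big_mkcond /=; apply: eq_bigr => i _; rewrite ffunE.
  by case: ifP => //; rewrite cards0.
apply: (in_bigU _ _ _ F).
  apply/andP; split; last by rewrite hs.
  apply/forallP => i; rewrite ffunE; case: ifP => hi; last by rewrite cards0.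
  by move: hi; rewrite inE => ->; rewrite orbT.
move=> k _ /=; case: ifP => // hk.
move: hk; rewrite ffunE; case: ifP => _; last by rewrite inE.
by rewrite inE /Mw mxE => /eqP.
Qed.

End Prob.

Theorem mainTheorem16 (R : realType) :
  exists C : R, 0 < C /\
  forall (n : nat) (eps : R), 0 < eps -> eps <= 1 / 2 ->
  forall (d : measure_display) (T : measurableType d) (P : probability T R)
         (A : 'I_n -> 'I_n -> T -> R),
    (forall i j, measurable_fun setT (A i j)) ->
    mutually_independent P (fun k : 'I_n * 'I_n => A k.1 k.2) ->
    identically_distributed P (fun k : 'I_n * 'I_n => A k.1 k.2) ->
    (forall i j, (\int[P]_w ((A i j w) ^+ 2)%:E <= 1)%E) ->
    (forall i j, {ae P, forall w, A i j w = 0 \/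
        (Num.sqrt n%:R / 2 <= `|A i j w| /\
         `|A i j w| <= 5 * Num.sqrt n%:R / Num.sqrt eps)}) ->
    exists E : set T, measurable E /\
      (P E >= (1 - 2 * expR (- (eps * n%:R) / 4))%:E)%E /\
      forall w, E w ->
        exists I J : {set 'I_n},
          [/\ (#|I|%:R <= eps * n%:R), (#|J|%:R <= eps * n%:R) &
              opnorm (zero_block (\matrix_(i, j) A i j w) I J)
                <= C * ln (eps^-1) / Num.sqrt eps * Num.sqrt n%:R].
Proof.
exists 700; split; first lra.
move=> n eps e0 e1 d T P A HA Hind Hid Hint Hae.
set L := ln (eps^-1).
have L2 : 1 / 2 <= L := ln_inv_ge R eps e0 e1.
have L0 : 0 <= L by lra.
set D := (Num.trunc L + 68)%N.
have HDle : D%:R <= L + 68.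
  by rewrite /D natrD lerD2r; have /andP[] := trunc_itv L0.
have HDge : L + 67 < D%:R.
  have /andP[_ h] := trunc_itv L0.
  rewrite /D natrD; move: h; rewrite -addn1 natrD; lra.
have HexpD : expR (4 * (expR 1 * expR 1) - D%:R) <= eps / 4.
  have h4 := expR1_le4 R.
  have he : expR 1 * expR 1 <= 16 :> R.
    have := expR_ge0 (1 : R); nra.
  have hl4 := ln4_le3 R.
  have hL : L = - ln eps by rewrite /L lnV ?posrE.
  have -> : eps / 4 = expR (ln eps - ln 4).
    by rewrite expRB !lnK ?posrE //; lra.
  rewrite ler_expR; lra.
have q0 : 0 <= 4 / n%:R :> R by rewrite divr_ge0.
have Hq : 4 / n%:R * n%:R <= 4 :> R.
  case: (posnP n) => [->|n0]; first by rewrite mulr0; lra.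
  by rewrite mulfVK // pnatr_eq0 -lt0n.
set t := eps * n%:R / 2.
set x := expR (- (eps * n%:R) / 4).
have Hsum : \sum_(F | Wgood R n D t F) (4 / n%:R) ^+ (\sum_i #|F i|) <= x.
  apply: le_trans (witness_bound R n D (4 / n%:R) t q0) _.
  exact: final_real.
have [mR pR] := BadR_bound R n eps d T P A HA Hint Hae Hind D t.
have [mC pC] := BadC_bound R n eps d T P A HA Hint Hae Hind D t.
have /choice [N HN] : forall k : 'I_n * 'I_n, exists N : set T,
    [/\ measurable N, P N = 0 & ~` [set w | A k.1 k.2 w = 0 \/
        (Num.sqrt n%:R / 2 <= `|A k.1 k.2 w| /\
         `|A k.1 k.2 w| <= 5 * Num.sqrt n%:R / Num.sqrt eps)] `<=` N].
  move=> k; have := Hae k.1 k.2; rewrite /almost_everywhere => -[N [mN PN HN]].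
  by exists N; split.
set Null := \big[setU/set0]_(k : 'I_n * 'I_n | true) N k.
have mN : forall k, measurable (N k) by move=> k; case: (HN k).
have [mNull pNull] := bigU_le R d T P _ xpredT N mN.
have pNull0 : (P Null <= 0)%E.
  apply: le_trans pNull _; rewrite big1 // => k _.
  by case: (HN k) => _ -> _.
set U := BadR R n d T A D t `|` BadC R n d T A D t `|` Null.
have mU : measurable U by apply: measurableU => //; apply: measurableU.
have hU : (P U <= (2 * x)%:E)%E.
  apply: le_trans (measureU2 _ _ _) _ => //; first exact: measurableU.
  apply: le_trans (leeD (measureU2 _ _ _) pNull0) _ => //.
  have -> : ((2 * x)%:E = x%:E + x%:E)%E by rewrite -EFinD; congr EFin; ring.
  rewrite adde0; apply: leeD.
    by apply: le_trans pR _; rewrite lee_fin.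
  by apply: le_trans pC _; rewrite lee_fin.
exists (~` U); split; first exact: measurableC.
split.
  rewrite probability_setC // (P_fin R d T P U mU) -EFinB lee_fin.
  by move: hU; rewrite (P_fin R d T P U mU) lee_fin; lra.
move=> w Uw.
have nR : ~ BadR R n d T A D t w by move=> h; apply: Uw; left; left.
have nC : ~ BadC R n d T A D t w by move=> h; apply: Uw; left; right.
have nN : ~ Null w by move=> h; apply: Uw; right.
set K := 5 * Num.sqrt n%:R / Num.sqrt eps.
have K0 : 0 <= K by rewrite /K !mulr_ge0 ?invr_ge0 ?sqrtr_ge0.
have HK : forall i j, `|Mw R n d T A w i j| <= K.
  move=> i j; rewrite /Mw mxE.
  have Q : A i j w = 0 \/ (Num.sqrt n%:R / 2 <= `|A i j w| /\
         `|A i j w| <= K).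
    apply: contrapT => Qx; apply: nN.
    apply: (in_bigU d T _ xpredT N (i, j)) => //.
    by case: (HN (i, j)) => _ _; apply.
  by case: Q => [->|[_ ->]]; rewrite ?normr0.
have SR := notBadR R n d T A D t w nR.
have SC := notBadC R n d T A D t w nC.
exists (Iset R n D (Mw R n d T A w)), (Jset R n D (Mw R n d T A w)); split.
- apply: (@le_trans _ _ (t + t)); last by rewrite /t; lra.
  apply: (@le_trans _ _ ((\sum_(i in HR R n D (Mw R n d T A w)) #|rowS R n (Mw R n d T A w) i| +
     \sum_(j in HC R n D (Mw R n d T A w)) #|colS R n (Mw R n d T A w) j|)%:R)).
    by rewrite ler_nat; apply: card_Iset_le.
  by rewrite natrD; apply: lerD.
- apply: (@le_trans _ _ (t + t)); last by rewrite /t; lra.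
  apply: (@le_trans _ _ ((\sum_(i in HR R n D (Mw R n d T A w)) #|rowS R n (Mw R n d T A w) i| +
     \sum_(j in HC R n D (Mw R n d T A w)) #|colS R n (Mw R n d T A w) j|)%:R)).
    by rewrite ler_nat; apply: card_Jset_le.
  by rewrite natrD; apply: lerD.
apply: le_trans (opnorm_sparse R n D K _ K0 (zb_bound R n D _ K HK K0)
   (zb_row R n D _) (zb_col R n D _)) _.
have se : 0 < Num.sqrt eps by rewrite sqrtr_gt0.
have sn : 0 <= Num.sqrt n%:R := sqrtr_ge0 _.
have -> : D%:R * K = (5 * D%:R) * (Num.sqrt n%:R / Num.sqrt eps) by rewrite /K; field; lra.
have -> : 700 * L / Num.sqrt eps * Num.sqrt n%:R = (700 * L) * (Num.sqrt n%:R / Num.sqrt eps).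
  by field; lra.
apply: ler_wpM2r; first by rewrite divr_ge0 // ltW.
lra.
Qed.
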